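(* Let $\mathcal C$ be a parsummable category and fix an injection $\phi\colon\omega\times\omega\to\omega$. Then $S_{\mathcal C}\colon\Theta(\mathcal C)\to\mathcal C$ (described below) is a well-defined functor, and it preserves sums.
   Context: Let $\omega=\{1,2,\dots\}$, $\mathbf m=\{1,\dots,m\}$, $\mathcal M$ the monoid of injections $\omega\to\omega$. A parsummable category is a small $E\mathcal M$-category (strict action of the chaotic category on $\mathcal M$; $u_*$ the action, $[v,u]\colon u_*\Rightarrow v_*$) all of whose objects have finite support (intersection of finite $A\subset\omega$ with $u_*X=X$ for all $u$ fixing $A$ pointwise), with an object $0$ of empty support and a strictly unital, associative, commutative, equivariant sum $+$ on the full subcategory $\mathcal C\boxtimes\mathcal C$ of disjointly supported pairs. For a finite set $A$, injections $\phi,\phi'\colon A\times\omega\to\omega$ and $X_\bullet=(X_a)_{a\in A}$: $\phi_*(X_\bullet)=\sum_a\phi(a,-)_*(X_a)$, $[\phi',\phi]_{X_\bullet}=\sum_a[\phi'(a,-),\phi(a,-)]_{X_a}$. $\Sigma(\mathcal C)$ is the permutative category with objects finite sequences of objects of $\mathcal C$ (unit $\epsilon$ the empty sequence), morphisms $(X_1,\dots,X_m)\to(Y_1,\dots,Y_n)$ classes $[\psi,f,\phi]$ (injections $\phi\colon\mathbf m\times\omega\to\omega$, $\psi\colon\mathbf n\times\omega\to\omega$, $f\colon\phi_*(X_\bullet)\to\psi_*(Y_\bullet)$) modulo $(\psi,f,\phi)\sim(\psi',[\psi',\psi]f[\phi,\phi'],\phi')$; every morphism has a unique representative with prescribed $\phi,\psi$;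 composition $[\rho,g,\theta][\psi,f,\phi]=[\rho,g[\theta,\psi]f,\phi]$; tensor product concatenation on objects and $[\psi,f,\phi]\otimes[\rho,g,\theta]=[\psi+\rho,f+g,\phi+\theta]$ for representatives with disjoint images ($(\phi+\theta)(i,x)=\phi(i,x)$ for $i\le m$, $\theta(i-m,x)$ otherwise); symmetry $[\bar\phi,\mathrm{id},\phi]$ with $\bar\phi(i,x)=\phi(i+m,x)$ for $i\le n$, $\phi(i-n,x)$ otherwise. For a small permutative category $\mathscr P$, $\Phi(\mathscr P)$ is the parsummable category with objects sequences $P=(P_1,P_2,\dots)$ with $P_i=\mathbf 1$ for almost all $i$, morphisms $P\to Q$ the morphisms $\bigotimes_{i\in\omega}P_i\to\bigotimes_{i\in\omega}Q_i$ in $\mathscr P$ (ordered tensor of non-unit entries), support $\{i:P_i\ne\mathbf1\}$, sum of disjointly supported objects by merging entries, and sum of morphisms $f+g$ given by $f\otimes g$ conjugated with the coherence isomorphisms associated to the tautological bijections $\mathrm{supp}(P)\amalg\mathrm{supp}(P')\to\mathrm{supp}(P)\cup\mathrm{supp}(P')$ (the disjoint union ordered with the first summand before the second). $\Theta(\mathcal C)$ is the full parsummable subcategory of $\Phi\Sigma(\mathcal C)$ on sequences each of whose entries is $\epsilon$ or a $1$-tuple. For finite $A\subset\omega$ and $X_\bullet=(X_a)_{a\in A}$ in $\mathcal C$, $\langle A,X_\bullet\rangle\in\Theta(\mathcal C)$ has $i$-th entry $(X_i)$ for $i\in A$ and $\epsilon$ otherwise; every object is uniquely of this form, $\mathrm{supp}\langle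 A,X_\bullet\rangle=A$, and $\langle A,X_\bullet\rangle+\langle B,Y_\bullet\rangle=\langle A\cup B,X_\bullet+Y_\bullet\rangle$ for $A\cap B=\varnothing$. Let $\kappa_A\colon\{1,\dots,|A|\}\to A$ be the order-preserving bijection and $\kappa_A^*X_\bullet=(X_{\kappa_A(1)},\dots,X_{\kappa_A(|A|)})$; a morphism $\langle A,X_\bullet\rangle\to\langle B,Y_\bullet\rangle$ in $\Theta(\mathcal C)$ is a morphism $\kappa_A^*X_\bullet\to\kappa_B^*Y_\bullet$ in $\Sigma(\mathcal C)$. $S_{\mathcal C}$: on objects $S_{\mathcal C}\langle A,X_\bullet\rangle=(\phi|_A)_*(X_\bullet)$, where $\phi|_A$ is the restriction of $\phi$ to $A\times\omega$; a morphism $\alpha\colon\langle A,X_\bullet\rangle\to\langle B,Y_\bullet\rangle$ has a unique representative of the form $(\phi|_B\circ(\kappa_B\times\mathrm{id}),f,\phi|_A\circ(\kappa_A\times\mathrm{id}))$ and $S_{\mathcal C}(\alpha)=f$. A functor $G$ between parsummable categories preserves sums if $G(0)=0$, $G\times G$ maps disjointly supported pairs to disjointly supported pairs, and $G$ commutes with $+$ on objects and morphisms. *)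

(* Defs.v *)
(* MathComp (boot only) + Stdlib Relations.
   omega = {1,2,...} is modelled by nat = {0,1,2,...} (order-preserving
   relabelling n |-> n+1). *)
From Stdlib Require Import Relation_Operators.
From mathcomp Require Import all_boot.
Set Implicit Arguments. Unset Strict Implicit. Unset Printing Implicit Defensive.

(* act u X = u_* X,  actm u f = u_* f,  tr v u X = [v,u]_X : u_*X -> v_*X.
   compm g f = g o f.  Composition is total but only constrained on composable
   pairs; the action is only constrained for injective u. *)
Record EMcat : Type := {
  Ob : Type; Mor : Type;
  dom : Mor -> Ob; cod : Mor -> Ob;
  idm : Ob -> Mor; compm : Mor -> Mor -> Mor;
  act : (nat -> nat) -> Ob -> Ob;
  actm : (nat -> nat) -> Mor -> Mor;
  tr : (nat -> nat) -> (nat -> nat) -> Ob -> Mor;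
  dom_idm : forall X, dom (idm X) = X;
  cod_idm : forall X, cod (idm X) = X;
  dom_comp : forall f g, cod f = dom g -> dom (compm g f) = dom f;
  cod_comp : forall f g, cod f = dom g -> cod (compm g f) = cod g;
  comp_idl : forall f, compm (idm (cod f)) f = f;
  comp_idr : forall f, compm f (idm (dom f)) = f;
  compA : forall f g h, cod f = dom g -> cod g = dom h ->
            compm h (compm g f) = compm (compm h g) f;
  dom_actm : forall u f, injective u -> dom (actm u f) = act u (dom f);
  cod_actm : forall u f, injective u -> cod (actm u f) = act u (cod f);
  actm_idm : forall u X, injective u -> actm u (idm X) = idm (act u X);
  actm_comp : forall u f g, injective u -> cod f = dom g ->
            actm u (compm g f) = compm (actm u g) (actm u f);
  dom_tr : forall u v X, injective u -> injective v -> dom (tr v u X) = act u X;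
  cod_tr : forall u v X, injective u -> injective v -> cod (tr v u X) = act v X;
  tr_id : forall u X, injective u -> tr u u X = idm (act u X);
  tr_comp : forall u v w X, injective u -> injective v -> injective w ->
            compm (tr w v X) (tr v u X) = tr w u X;
  tr_nat : forall u v f, injective u -> injective v ->
            compm (actm v f) (tr v u (dom f)) = compm (tr v u (cod f)) (actm u f);
  act_id : forall X, act id X = X;
  actm_id : forall f, actm id f = f;
  act_comp : forall u v X, injective u -> injective v ->
            act (u \o v) X = act u (act v X);
  actm_comp_act : forall u v f, injective u -> injective v ->
            actm (u \o v) f = actm u (actm v f);
  tr_comp_act : forall u u' v v' X, injective u -> injective u' ->
            injective v -> injective v' ->
            tr (u' \o v') (u \o v) X = compm (tr u' u (act v' X)) (actm u (tr v' v X))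
}.

Definition supported (C : EMcat) (X : Ob C) (A : seq nat) : Prop :=
  forall u : nat -> nat, injective u -> (forall a, a \in A -> u a = a) -> act u X = X.
Definition in_supp (C : EMcat) (X : Ob C) (i : nat) : Prop :=
  forall A : seq nat, supported X A -> i \in A.
Definition disj_supp (C : EMcat) (X Y : Ob C) : Prop :=
  forall i, in_supp X i -> in_supp Y i -> False.

(* add / addm are the sum functor on C [x] C; they are total functions whose
   values on non-disjointly supported pairs are irrelevant (unconstrained). *)
Record parsummable : Type := {
  em :> EMcat;
  zero : Ob em;
  add : Ob em -> Ob em -> Ob em;
  addm : Mor em -> Mor em -> Mor em;
  fin_supp : forall X : Ob em, exists A, supported X A;
  zero_supp : forall i, ~ in_supp zero i;
  dom_addm : forall f g, disj_supp (dom f) (dom g) -> disj_supp (cod f) (cod g) ->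
      dom (addm f g) = add (dom f) (dom g);
  cod_addm : forall f g, disj_supp (dom f) (dom g) -> disj_supp (cod f) (cod g) ->
      cod (addm f g) = add (cod f) (cod g);
  addm_idm : forall X Y, disj_supp X Y -> addm (idm X) (idm Y) = idm (add X Y);
  addm_comp : forall f g f' g', cod f = dom f' -> cod g = dom g' ->
      disj_supp (dom f) (dom g) -> disj_supp (cod f) (cod g) ->
      disj_supp (cod f') (cod g') ->
      addm (compm f' f) (compm g' g) = compm (addm f' g') (addm f g);
  add0X : forall X, add zero X = X;
  addm0f : forall f, addm (idm zero) f = f;
  addA : forall X Y Z, disj_supp X Y -> disj_supp X Z -> disj_supp Y Z ->
      add (add X Y) Z = add X (add Y Z);
  addmA : forall f g h,
      disj_supp (dom f) (dom g) -> disj_supp (dom f) (dom h) -> disj_supp (dom g) (dom h) ->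
      disj_supp (cod f) (cod g) -> disj_supp (cod f) (cod h) -> disj_supp (cod g) (cod h) ->
      addm (addm f g) h = addm f (addm g h);
  addC : forall X Y, disj_supp X Y -> add X Y = add Y X;
  addmC : forall f g, disj_supp (dom f) (dom g) -> disj_supp (cod f) (cod g) ->
      addm f g = addm g f;
  act_add : forall u X Y, injective u -> disj_supp X Y ->
      act u (add X Y) = add (act u X) (act u Y);
  actm_addm : forall u f g, injective u ->
      disj_supp (dom f) (dom g) -> disj_supp (cod f) (cod g) ->
      actm u (addm f g) = addm (actm u f) (actm u g);
  tr_add : forall u v X Y, injective u -> injective v -> disj_supp X Y ->
      tr v u (add X Y) = addm (tr v u X) (tr v u Y)
}.

(* injections  m x omega -> omega  are functions phi : nat -> nat -> nat
   (first argument = 0-based position) injective on {i < m} x nat *)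
Definition inj_on (m : nat) (phi : nat -> nat -> nat) : Prop :=
  forall i j x y, i < m -> j < m -> phi i x = phi j y -> i = j /\ x = y.

Fixpoint pushf (C : parsummable) (phi : nat -> nat -> nat) (Xs : seq (Ob C)) : Ob C :=
  if Xs is X :: Xs' then add (act (phi 0) X) (pushf (fun i => phi i.+1) Xs')
  else zero C.

Fixpoint trf (C : parsummable) (phi' phi : nat -> nat -> nat) (Xs : seq (Ob C)) : Mor C :=
  if Xs is X :: Xs' then
    addm (tr (phi' 0) (phi 0) X) (trf (fun i => phi' i.+1) (fun i => phi i.+1) Xs')
  else idm (zero C).

Record sig_mor (C : parsummable) := SigMor {
  s_src : seq (Ob C); s_tgt : seq (Ob C);
  s_in : nat -> nat -> nat; s_out : nat -> nat -> nat; s_f : Mor C }.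

Definition sig_valid (C : parsummable) (t : sig_mor C) : Prop :=
  inj_on (size (s_src t)) (s_in t) /\ inj_on (size (s_tgt t)) (s_out t) /\
  dom (s_f t) = pushf (s_in t) (s_src t) /\ cod (s_f t) = pushf (s_out t) (s_tgt t).

Definition sig_rel (C : parsummable) (t t' : sig_mor C) : Prop :=
  sig_valid t /\ sig_valid t' /\ s_src t' = s_src t /\ s_tgt t' = s_tgt t /\
  s_f t' = compm (trf (s_out t') (s_out t) (s_tgt t))
                (compm (s_f t) (trf (s_in t) (s_in t') (s_src t))).

Definition sig_equiv (C : parsummable) : sig_mor C -> sig_mor C -> Prop :=
  clos_refl_sym_trans (sig_mor C) (@sig_rel C).

(* the representative of the class of t with prescribed injections phi, psi *)
Definition srep (C : parsummable) (t : sig_mor C) (phi psi : nat -> nat -> nat) : sig_mor C :=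
  SigMor (s_src t) (s_tgt t) phi psi
    (compm (trf psi (s_out t) (s_tgt t)) (compm (s_f t) (trf (s_in t) phi (s_src t)))).

Definition scomp (C : parsummable) (t2 t1 : sig_mor C) : sig_mor C :=
  SigMor (s_src t1) (s_tgt t2) (s_in t1) (s_out t2)
    (compm (s_f t2) (compm (trf (s_in t2) (s_out t1) (s_tgt t1)) (s_f t1))).

Definition cat_inj (m : nat) (phi theta : nat -> nat -> nat) : nat -> nat -> nat :=
  fun i x => if i < m then phi i x else theta (i - m) x.
Definition postc (e : nat -> nat) (phi : nat -> nat -> nat) : nat -> nat -> nat :=
  fun i x => e (phi i x).

(* tensor product: first pass to representatives with disjoint images
   (even resp. odd values), then [psi+rho, f+g, phi+theta] *)
Definition stensor (C : parsummable) (t1 t2 : sig_mor C) : sig_mor C :=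
  let a := srep t1 (postc (fun x => x.*2) (s_in t1)) (postc (fun x => x.*2) (s_out t1)) in
  let b := srep t2 (postc (fun x => x.*2.+1) (s_in t2)) (postc (fun x => x.*2.+1) (s_out t2)) in
  SigMor (s_src t1 ++ s_src t2) (s_tgt t1 ++ s_tgt t2)
    (cat_inj (size (s_src t1)) (s_in a) (s_in b))
    (cat_inj (size (s_tgt t1)) (s_out a) (s_out b))
    (addm (s_f a) (s_f b)).

Definition pinj (i x : nat) : nat := 2 ^ i * x.*2.+1.

(* coherence isomorphism of Sigma(C) for a reindexing: target entry j is the
   source entry tau j;  it is [phi o (tau x id), id, phi] *)
Definition sperm (C : parsummable) (Xs Ys : seq (Ob C)) (tau : nat -> nat) : sig_mor C :=
  SigMor Xs Ys pinj (fun j x => pinj (tau j) x) (idm (pushf pinj Xs)).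

(* <A, X_.> is the list of pairs (a, X_a), a in A, in increasing order of a;
   so map fst = A (listed increasingly) and map snd = kappa_A^* X_. *)
Definition th_ob (C : parsummable) (P : seq (nat * Ob C)) : Prop := sorted ltn (map fst P).
(* supp <A,X_.> = A *)
Definition th_disj (C : parsummable) (P Q : seq (nat * Ob C)) : Prop :=
  forall i, i \in map fst P -> i \in map fst Q -> False.
Definition th_add (C : parsummable) (P Q : seq (nat * Ob C)) : seq (nat * Ob C) :=
  merge (fun p q : nat * Ob C => p.1 <= q.1) P Q.

Record th_mor (C : parsummable) := ThMor {
  t_src : seq (nat * Ob C); t_tgt : seq (nat * Ob C); t_rep : sig_mor C }.

Definition th_valid (C : parsummable) (a : th_mor C) : Prop :=
  th_ob (t_src a) /\ th_ob (t_tgt a) /\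
  s_src (t_rep a) = map snd (t_src a) /\ s_tgt (t_rep a) = map snd (t_tgt a) /\
  sig_valid (t_rep a).

Definition th_equiv (C : parsummable) (a b : th_mor C) : Prop :=
  t_src a = t_src b /\ t_tgt a = t_tgt b /\ sig_equiv (t_rep a) (t_rep b).

Definition th_comp (C : parsummable) (b a : th_mor C) : th_mor C :=
  ThMor (t_src a) (t_tgt b) (scomp (t_rep b) (t_rep a)).

(* sum of morphisms: (a (x) b) conjugated with the coherence isos of the
   tautological bijections supp P |_| supp P' -> supp P u supp P' *)
Definition th_addm (C : parsummable) (a b : th_mor C) : th_mor C :=
  let P := t_src a in let P' := t_src b in let Q := t_tgt a in let Q' := t_tgt b in
  ThMor (th_add P P') (th_add Q Q')
    (scomp
       (sperm (map snd Q ++ map snd Q') (map snd (th_add Q Q'))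
              (fun j => index (nth 0 (map fst (th_add Q Q')) j) (map fst Q ++ map fst Q')))
       (scomp (stensor (t_rep a) (t_rep b))
              (sperm (map snd (th_add P P')) (map snd P ++ map snd P')
                     (fun k => index (nth 0 (map fst P ++ map fst P') k)
                                     (map fst (th_add P P')))))).

Definition restr (C : parsummable) (phi : nat -> nat -> nat) (P : seq (nat * Ob C)) :
  nat -> nat -> nat := fun i x => phi (nth 0 (map fst P) i) x.

Definition S_ob (C : parsummable) (phi : nat -> nat -> nat) (P : seq (nat * Ob C)) : Ob C :=
  pushf (restr phi P) (map snd P).

Definition S_mor (C : parsummable) (phi : nat -> nat -> nat) (a : th_mor C) : Mor C :=
  s_f (srep (t_rep a) (restr phi (t_src a)) (restr phi (t_tgt a))).

(* Main.v *)
Require Import Defs.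
From Stdlib Require Import Relation_Operators.
From mathcomp Require Import all_boot.
From Stdlib Require Import Classical FunctionalExtensionality Permutation.
Set Implicit Arguments. Unset Strict Implicit. Unset Printing Implicit Defensive.


Definition swp (p q x : nat) := if x == p then q else if x == q then p else x.
Lemma swpK p q : involutive (swp p q).
Proof.
move=> x; rewrite /swp.
case: (eqVneq x p) => [->|xp]; first by rewrite eqxx; case: (eqVneq q p) => [->|]; rewrite ?eqxx.
case: (eqVneq x q) => [->|xq]; first by rewrite eqxx.
by rewrite (negbTE xp) (negbTE xq).
Qed.

Lemma perm_ext (u : nat -> nat) (A : seq nat) : injective u ->
  exists t t' : nat -> nat, cancel t t' /\ cancel t' t /\
    forall a, a \in A -> t a = u a.
Proof.
move=> iu; elim: A => [|a A [t [t' [c1 [c2 Ht]]]]]; first by exists id, id.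
case aA: (a \in A).
  exists t, t'; split=> //; split=> // b; rewrite inE => /orP[/eqP->|]; last exact: Ht.
  by apply: Ht; rewrite aA.
exists (swp (t a) (u a) \o t), (t' \o swp (t a) (u a)); split.
  by move=> x /=; rewrite swpK c1.
split; first by move=> x /=; rewrite c2 swpK.
move=> b; rewrite inE => /orP[/eqP->|bA] /=.
  by rewrite /swp eqxx.
rewrite (Ht b bA) /swp.
case: (eqVneq (u b) (t a)) => [e|_].
  by move: e; rewrite -Ht // => /(can_inj c1) e; rewrite e aA in bA.
case: (eqVneq (u b) (u a)) => [/iu e|//].
by rewrite e aA in bA.
Qed.

Section Supp.
Variable C : parsummable.
Implicit Types X Y : Ob C.

Lemma act_agree X A u w : supported X A -> injective u -> injective w ->
  (forall a, a \in A -> u a = w a) -> act u X = act w X.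
Proof.
move=> sX iu iw E.
have [t [t' [c1 [c2 Ht]]]] := perm_ext A iu.
have it : injective t := can_inj c1.
have key : forall v, injective v -> (forall a, a \in A -> v a = t a) -> act v X = act t X.
  move=> v iv Hv.
  have -> : v = t \o (t' \o v) by apply: functional_extensionality => x /=; rewrite c2.
  rewrite act_comp //; last exact: inj_comp (can_inj c2) iv.
  rewrite sX //; first exact: inj_comp (can_inj c2) iv.
  by move=> a aA /=; rewrite Hv // c1.
rewrite (key u) // ?(key w) // => a aA; rewrite Ht //.
by rewrite -E.
Qed.

Lemma supp_act X A u : supported X A -> injective u -> supported (act u X) (map u A).
Proof.
move=> sX iu v iv Hv.
rewrite -act_comp //; apply: (act_agree sX) => //; first exact: inj_comp.
by move=> a aA /=; rewrite Hv // map_f.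
Qed.

Lemma supp_add X Y A B : supported X A -> supported Y B -> disj_supp X Y ->
  supported (add X Y) (A ++ B).
Proof.
move=> sX sY d u iu Hu; rewrite act_add // sX ?sY // => a aA; apply: Hu;
  by rewrite mem_cat aA ?orbT.
Qed.

Definition supp_in X (S : nat -> Prop) := forall i, in_supp X i -> S i.

Lemma supp_in_act X u : injective u -> supp_in (act u X) (fun i => exists x, u x = i).
Proof.
move=> iu i H; have [A sA] := fin_supp X.
have := H _ (supp_act sA iu); case/mapP=> x _ ->; by exists x.
Qed.

Lemma not_in_supp X i : ~ in_supp X i -> exists A, supported X A /\ i \notin A.
Proof.
move=> H; apply: NNPP => H2; apply: H => A sA; apply: NNPP => iA.
by apply: H2; exists A; split=> //; apply/negP.
Qed.

Lemma supp_in_add X Y S T : disj_supp X Y -> supp_in X S -> supp_in Y T ->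
  supp_in (add X Y) (fun i => S i \/ T i).
Proof.
move=> d sX sY i H; apply: NNPP => /not_or_and [nS nT].
have [A [hA iA]] : exists A, supported X A /\ i \notin A.
  by apply: not_in_supp => /sX.
have [B [hB iB]] : exists A, supported Y A /\ i \notin A.
  by apply: not_in_supp => /sY.
have := H _ (supp_add hA hB d); by rewrite mem_cat (negbTE iA) (negbTE iB).
Qed.

Lemma supp_in_zero S : supp_in (zero C) S.
Proof. by move=> i /zero_supp. Qed.

Lemma disj_of X Y S T : supp_in X S -> supp_in Y T ->
  (forall i, S i -> T i -> False) -> disj_supp X Y.
Proof. by move=> sX sY H i /sX a /sY b; exact: H a b. Qed.

Lemma supp_in_mono X (S T : nat -> Prop) : supp_in X S -> (forall i, S i -> T i) -> supp_in X T.
Proof. by move=> H H' i /H /H'. Qed.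

Lemma disj_zero X : disj_supp X (zero C).
Proof. by move=> i _ /zero_supp. Qed.

Lemma disj_sym X Y : disj_supp X Y -> disj_supp Y X.
Proof. by move=> H i a b; exact: H b a. Qed.

End Supp.


Section Trf.
Variable C : parsummable.
Implicit Types X Y : Ob C.
Implicit Types Xs Ys : seq (Ob C).

Definition rng (b : nat -> nat -> nat) (m : nat) (i : nat) := exists k x, k < m /\ b k x = i.

Lemma inj_on_shift m b : inj_on m.+1 b -> inj_on m (fun i => b i.+1).
Proof. by move=> H i j x y hi hj /H [] // [->]. Qed.

Lemma inj_on_row m b i : inj_on m b -> i < m -> injective (b i).
Proof. by move=> H hi x y /H [] . Qed.

Lemma inj_on_le m n b : m <= n -> inj_on n b -> inj_on m b.
Proof. move=> mn H i j x y hi hj; apply: H; exact: leq_trans mn. Qed.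

Lemma supp_pushf Xs b : inj_on (size Xs) b -> supp_in (pushf b Xs) (rng b (size Xs)).
Proof.
elim: Xs b => [|X Xs IH] b H /=; first exact: supp_in_zero.
have H' := inj_on_shift H.
apply: supp_in_mono; first apply: supp_in_add.
- apply: disj_of (supp_in_act (inj_on_row H _)) (IH _ H') _ => //.
  move=> i [x <-] [k [y [hk /esym /H]]] [] //; by rewrite ltnS ltnW.
- exact: supp_in_act (inj_on_row H _).
- exact: IH.
move=> i [[x <-]|[k [y [hk <-]]]]; first by exists 0, x.
by exists k.+1, y.
Qed.

Lemma disj_head X Xs b : inj_on (size (X :: Xs)) b ->
  disj_supp (act (b 0) X) (pushf (fun i => b i.+1) Xs).
Proof.
move=> H; apply: disj_of (supp_in_act (inj_on_row H _)) (supp_pushf (inj_on_shift H)) _ => //.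
move=> i [x <-] [k [y [hk /esym /H]]] [] //; by rewrite /= ltnS ltnW.
Qed.

Lemma disj_pushf Xs Ys b c : inj_on (size Xs) b -> inj_on (size Ys) c ->
  (forall k k' x y, k < size Xs -> k' < size Ys -> b k x = c k' y -> False) ->
  disj_supp (pushf b Xs) (pushf c Ys).
Proof.
move=> hb hc H; apply: disj_of (supp_pushf hb) (supp_pushf hc) _.
by move=> i [k [x [hk <-]]] [k' [y [hk' /esym]]]; apply: H.
Qed.

Lemma trf_hom Xs a b : inj_on (size Xs) a -> inj_on (size Xs) b ->
  dom (trf a b Xs) = pushf b Xs /\ cod (trf a b Xs) = pushf a Xs.
Proof.
elim: Xs a b => [|X Xs IH] a b ha hb /=; first by rewrite dom_idm cod_idm.
have [d1 c1] := IH _ _ (inj_on_shift ha) (inj_on_shift hb).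
have ia := inj_on_row ha (ltn0Sn _); have ib := inj_on_row hb (ltn0Sn _).
have D1 : disj_supp (dom (tr (a 0) (b 0) X)) (dom (trf (fun i => a i.+1) (fun i => b i.+1) Xs)).
  by rewrite dom_tr // d1; exact: disj_head.
have D2 : disj_supp (cod (tr (a 0) (b 0) X)) (cod (trf (fun i => a i.+1) (fun i => b i.+1) Xs)).
  by rewrite cod_tr // c1; exact: disj_head.
by rewrite dom_addm // cod_addm // dom_tr // cod_tr // d1 c1.
Qed.

Lemma trf_dom Xs a b : inj_on (size Xs) a -> inj_on (size Xs) b -> dom (trf a b Xs) = pushf b Xs.
Proof. by move=> ha hb; case: (trf_hom ha hb). Qed.
Lemma trf_cod Xs a b : inj_on (size Xs) a -> inj_on (size Xs) b -> cod (trf a b Xs) = pushf a Xs.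
Proof. by move=> ha hb; case: (trf_hom ha hb). Qed.

Lemma comp_idm0 : compm (idm (zero C)) (idm (zero C)) = idm (zero C).
Proof. by have := comp_idl (idm (zero C)); rewrite cod_idm. Qed.

Lemma trf_comp Xs a b c : inj_on (size Xs) a -> inj_on (size Xs) b -> inj_on (size Xs) c ->
  compm (trf a b Xs) (trf b c Xs) = trf a c Xs.
Proof.
elim: Xs a b c => [|X Xs IH] a b c ha hb hc /=; first exact: comp_idm0.
have ha' := inj_on_shift ha; have hb' := inj_on_shift hb; have hc' := inj_on_shift hc.
have ia := inj_on_row ha (ltn0Sn _); have ib := inj_on_row hb (ltn0Sn _).
have ic := inj_on_row hc (ltn0Sn _).
rewrite -addm_comp ?IH ?tr_comp //.
- by rewrite cod_tr // dom_tr.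
- by rewrite trf_cod // trf_dom.
- by rewrite dom_tr // trf_dom //; exact: disj_head.
- by rewrite cod_tr // trf_cod //; exact: disj_head.
- by rewrite cod_tr // trf_cod //; exact: disj_head.
Qed.

Lemma trf_id Xs a : inj_on (size Xs) a -> trf a a Xs = idm (pushf a Xs).
Proof.
elim: Xs a => [|X Xs IH] a ha //=.
have ia := inj_on_row ha (ltn0Sn _).
rewrite tr_id // IH ?addm_idm //; last exact: inj_on_shift.
exact: disj_head.
Qed.

Lemma trf_ext Xs a b a' b' : (forall i, i < size Xs -> a i = a' i) ->
  (forall i, i < size Xs -> b i = b' i) -> trf a b Xs = trf a' b' Xs.
Proof.
elim: Xs a b a' b' => [|X Xs IH] a b a' b' Ha Hb //=.
rewrite Ha // Hb //; congr (addm _ _); apply: IH => i hi; [exact: Ha|exact: Hb].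
Qed.

Lemma pushf_ext Xs b b' : (forall i, i < size Xs -> b i = b' i) -> pushf b Xs = pushf b' Xs.
Proof.
elim: Xs b b' => [|X Xs IH] b b' Hb //=.
rewrite (Hb 0) //; congr (add _ _); apply: IH => i hi; exact: (Hb i.+1).
Qed.

Definition shf (n : nat) (b : nat -> nat -> nat) := fun i => b (n + i).

Lemma pushf_cons b X Xs : pushf b (X :: Xs) = add (act (b 0) X) (pushf (fun i => b i.+1) Xs).
Proof. by []. Qed.

Lemma pushf_cat Xs Ys b : inj_on (size (Xs ++ Ys)) b ->
  pushf b (Xs ++ Ys) = add (pushf b Xs) (pushf (shf (size Xs) b) Ys).
Proof.
elim: Xs b => [|X Xs IH] b hb.
  by rewrite /= add0X /shf.
rewrite cat_cons in hb *.
have hb' : inj_on (size (Xs ++ Ys)) (fun i => b i.+1) := inj_on_shift hb.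
have ib := inj_on_row hb (ltn0Sn _).
have E : shf (size (X :: Xs)) b = shf (size Xs) (fun i => b i.+1) by [].
rewrite E !pushf_cons IH // addA //.
- by apply: (@disj_head X Xs b); apply: inj_on_le hb; rewrite /= size_cat ltnS leq_addr.
- have hs : inj_on (size Ys) (shf (size Xs) (fun i => b i.+1)).
    move=> i j x y hi hj e; have := hb' (size Xs + i) (size Xs + j) x y.
    by rewrite size_cat !ltn_add2l => /(_ hi hj e) [/addnI -> ->].
  apply: disj_of (supp_in_act ib) (supp_pushf hs) _.
  move=> i [x <-] [k [y [hk /esym /hb]]] [] //; by rewrite /= size_cat ltnS ?ltn_add2l ?ltn_addr.
- have hs : inj_on (size Ys) (shf (size Xs) (fun i => b i.+1)).
    move=> i j x y hi hj e; have := hb' (size Xs + i) (size Xs + j) x y.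
    by rewrite size_cat !ltn_add2l => /(_ hi hj e) [/addnI -> ->].
  apply: disj_pushf => //.
    by apply: inj_on_le hb'; rewrite size_cat leq_addr.
  move=> k k' x y hk hk' /hb' [] //; rewrite ?size_cat; first by rewrite ltn_addr.
    by rewrite ltn_add2l.
  by move=> e; move: hk; rewrite e ltnNge leq_addr.
Qed.

Lemma disj_act_pushf X Ys u c : injective u -> inj_on (size Ys) c ->
  (forall x k y, k < size Ys -> u x = c k y -> False) -> disj_supp (act u X) (pushf c Ys).
Proof.
move=> iu hc H; apply: disj_of (supp_in_act iu) (supp_pushf hc) _.
by move=> i [x <-] [k [y [hk /esym]]]; apply: H.
Qed.

Lemma inj_on_shf n m b : inj_on (n + m) b -> inj_on m (shf n b).
Proof.
move=> hb i j x y hi hj e; have := hb (n + i) (n + j) x y.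
by rewrite !ltn_add2l => /(_ hi hj e) [/addnI -> ->].
Qed.

Lemma trf_cons a b X Xs : trf a b (X :: Xs) =
  addm (tr (a 0) (b 0) X) (trf (fun i => a i.+1) (fun i => b i.+1) Xs).
Proof. by []. Qed.

Lemma trf_cat Xs Ys a b : inj_on (size (Xs ++ Ys)) a -> inj_on (size (Xs ++ Ys)) b ->
  trf a b (Xs ++ Ys) = addm (trf a b Xs) (trf (shf (size Xs) a) (shf (size Xs) b) Ys).
Proof.
elim: Xs a b => [|X Xs IH] a b ha hb.
  by rewrite /= addm0f /shf.
rewrite cat_cons in ha hb *.
have ha' : inj_on (size (Xs ++ Ys)) (fun i => a i.+1) := inj_on_shift ha.
have hb' : inj_on (size (Xs ++ Ys)) (fun i => b i.+1) := inj_on_shift hb.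
have ia := inj_on_row ha (ltn0Sn _); have ib := inj_on_row hb (ltn0Sn _).
rewrite size_cat in ha' hb'.
have E : forall c, shf (size (X :: Xs)) c = shf (size Xs) (fun i => c i.+1) by [].
have hXa : inj_on (size Xs) (fun i => a i.+1) by apply: inj_on_le ha'; rewrite leq_addr.
have hXb : inj_on (size Xs) (fun i => b i.+1) by apply: inj_on_le hb'; rewrite leq_addr.
have hYa := inj_on_shf ha'; have hYb := inj_on_shf hb'.
have G : forall c, inj_on (size Xs + size Ys).+1 c ->
    disj_supp (pushf (fun i => c i.+1) Xs) (pushf (shf (size Xs) (fun i => c i.+1)) Ys).
  move=> c hc; apply: disj_pushf.
  - by apply: inj_on_le (inj_on_shift hc); rewrite leq_addr.
  - exact: inj_on_shf (inj_on_shift hc).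
  move=> k k' x y hk hk' /(inj_on_shift hc) [] //; first by rewrite ltn_addr.
    by rewrite ltn_add2l.
  by move=> e; move: hk; rewrite e ltnNge leq_addr.
have H0 : forall c Z, inj_on (size Xs + size Ys).+1 c -> disj_supp (act (c 0) Z) (pushf (fun i => c i.+1) Xs).
  move=> c Z hc; apply: disj_act_pushf.
  - exact: inj_on_row hc (ltn0Sn _).
  - by apply: inj_on_le (inj_on_shift hc); rewrite leq_addr.
  move=> x k y hk /hc [] //; by rewrite ltnS ?ltn_addr.
have H1 : forall c Z, inj_on (size Xs + size Ys).+1 c ->
    disj_supp (act (c 0) Z) (pushf (shf (size Xs) (fun i => c i.+1)) Ys).
  move=> c Z hc; apply: disj_act_pushf.
  - exact: inj_on_row hc (ltn0Sn _).
  - exact: inj_on_shf (inj_on_shift hc).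
  move=> x k y hk /hc [] //; by rewrite ltnS ?ltn_add2l.
have ha2 : inj_on (size Xs + size Ys).+1 a by rewrite -size_cat.
have hb2 : inj_on (size Xs + size Ys).+1 b by rewrite -size_cat.
rewrite E !trf_cons IH ?size_cat // addmA //.
- by rewrite dom_tr // trf_dom //; apply: H0 hb2.
- by rewrite dom_tr // trf_dom //; apply: H1 hb2.
- by rewrite !trf_dom //; apply: G hb2.
- by rewrite cod_tr // trf_cod //; apply: H0 ha2.
- by rewrite cod_tr // trf_cod //; apply: H1 ha2.
- by rewrite !trf_cod //; apply: G ha2.
Qed.

End Trf.


Lemma merge_cons T (leT : rel T) x s1 y s2 : merge leT (x :: s1) (y :: s2) =
  if leT x y then x :: merge leT s1 (y :: s2) else y :: merge leT (x :: s1) s2.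
Proof. by []. Qed.

Lemma merge_nilr T (leT : rel T) s : merge leT s [::] = s.
Proof. by case: s. Qed.

Lemma perm_merge_In T (leT : rel T) s1 s2 : Permutation (merge leT s1 s2) (s1 ++ s2).
Proof.
elim: s1 s2 => [|x s1 IH1] s2 //=.
elim: s2 => [|y s2 IH2]; first by rewrite merge_nilr cats0.
rewrite merge_cons; case: (leT x y); first by constructor; apply: IH1.
apply: perm_trans; first by apply: perm_skip; apply: IH2.
rewrite /=; apply: perm_trans; first by apply: perm_swap.
constructor; exact: Permutation_middle.
Qed.

Section Merge.
Variables (T : Type) (op : T -> T -> T) (e : T) (compat : T -> T -> Prop).
Hypothesis csym : forall x y, compat x y -> compat y x.
Hypothesis ce : forall x, compat x e.
Hypothesis cop : forall x y z, compat x y -> compat x z -> compat y z -> compat x (op y z).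
Hypothesis opA : forall x y z, compat x y -> compat x z -> compat y z ->
  op (op x y) z = op x (op y z).
Hypothesis opC : forall x y, compat x y -> op x y = op y x.
Hypothesis ope : forall x, op e x = x.
Variables (I : Type) (key : I -> nat) (G : I -> T) (U : seq I).
Hypothesis HU : forall x y, List.In x U -> List.In y U -> key x <> key y -> compat (G x) (G y).

Definition fld L := foldr (fun i acc => op (G i) acc) e L.
Definition inU L := forall x, List.In x L -> List.In x U.

Lemma inU_cons x L : inU (x :: L) -> List.In x U /\ inU L.
Proof. by move=> H; split=> [|y hy]; apply: H; [left|right]. Qed.

Lemma compat_fld x L : List.In x U -> inU L -> uniq (map key L) ->
  key x \notin map key L -> compat (G x) (fld L).
Proof.
elim: L x => [|y L IH] x xU LU uL kx //=.
case/inU_cons: LU => yU LU; case/andP: uL => ky uL.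
rewrite inE negb_or in kx; case/andP: kx => /eqP kxy kx.
apply: cop; [exact: HU | exact: IH | exact: IH].
Qed.

Lemma compat_fld2 L L' : inU L -> inU L' -> uniq (map key L) -> uniq (map key L') ->
  (forall k, k \in map key L -> k \notin map key L') -> compat (fld L) (fld L').
Proof.
elim: L => [|y L IH] LU L'U uL uL' D /=; first exact: csym.
case/inU_cons: LU => yU LU; case/andP: uL => ky uL.
apply: csym; apply: cop.
- apply: csym; apply: compat_fld => //; apply: D; exact: mem_head.
- apply: csym; apply: IH => // k kL; apply: D; by rewrite inE kL orbT.
- exact: compat_fld.
Qed.

Lemma fld_merge (leT : rel I) L1 L2 : inU L1 -> inU L2 -> uniq (map key L1) -> uniq (map key L2) ->
  (forall k, k \in map key L1 -> k \notin map key L2) ->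
  fld (merge leT L1 L2) = op (fld L1) (fld L2).
Proof.
elim: L1 L2 => [|x L1 IH1] L2 L1U L2U u1 u2 D; first by rewrite /= ope.
elim: L2 L2U u2 D => [|y L2 IH2] L2U u2 D.
  by rewrite merge_nilr [in RHS]opC ?ope //; exact: ce.
have [xU L1U'] := inU_cons L1U; have [yU L2U'] := inU_cons L2U.
have u1' := u1; case/andP: u1' => kx u1'.
have u2' := u2; case/andP: u2' => ky u2'.
rewrite merge_cons; case: (leT x y).
  rewrite /= IH1 // => [|k kL]; last by apply: D; rewrite inE kL orbT.
  rewrite -opA //.
  - apply: compat_fld => //; exact: D (mem_head _ _).
  - apply: compat_fld => //; exact: D (mem_head _ _).
  - apply: compat_fld2 => // k kL; apply: D; by rewrite inE kL orbT.
change (op (G y) (fld (merge leT (x :: L1) L2)) = op (fld (x :: L1)) (op (G y) (fld L2))).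
rewrite IH2 // => [|k kL]; last first.
  by move: (D k kL); rewrite inE negb_or => /andP[].
have cyx : compat (G y) (fld (x :: L1)).
  apply: compat_fld => //; apply/negP => /D; by rewrite mem_head.
have cyL : compat (G y) (fld L2) by exact: compat_fld.
have cxL : compat (fld (x :: L1)) (fld L2).
  apply: compat_fld2 => // k kL; by move: (D k kL); rewrite inE negb_or => /andP[].
by rewrite -opA // (opC cyx) opA //; exact: csym.
Qed.

End Merge.


Section Sig.
Variable C : parsummable.
Implicit Types X Y : Ob C.
Implicit Types Xs Ys : seq (Ob C).
Implicit Types t : sig_mor C.

Definition Hom (f : Mor C) X Y := dom f = X /\ cod f = Y.

Lemma hom_comp f g X Y Z : Hom f X Y -> Hom g Y Z -> Hom (compm g f) X Z.
Proof.
move=> [df cf] [dg cg]; split; [rewrite dom_comp //|rewrite cod_comp //]; by rewrite cf dg.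
Qed.

Lemma assoc f g h X Y Z W : Hom f X Y -> Hom g Y Z -> Hom h Z W ->
  compm h (compm g f) = compm (compm h g) f.
Proof.
move=> [df cf] [dg cg] [dh ch].
have e1 : cod f = dom g by rewrite cf dg.
have e2 : cod g = dom h by rewrite cg dh.
exact: Defs.compA e1 e2.
Qed.

Lemma hom_trf Xs a b : inj_on (size Xs) a -> inj_on (size Xs) b ->
  Hom (trf a b Xs) (pushf b Xs) (pushf a Xs).
Proof. exact: trf_hom. Qed.

Lemma comp_idl' f Y : cod f = Y -> compm (idm Y) f = f.
Proof. by move=> <-; apply: comp_idl. Qed.
Lemma comp_idr' f X : dom f = X -> compm f (idm X) = f.
Proof. by move=> <-; apply: comp_idr. Qed.

Lemma srep_hom t phi psi : sig_valid t -> inj_on (size (s_src t)) phi ->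
  inj_on (size (s_tgt t)) psi ->
  Hom (s_f (srep t phi psi)) (pushf phi (s_src t)) (pushf psi (s_tgt t)).
Proof.
move=> [hi [ho [df cf]]] hp hq /=.
apply: hom_comp; last exact: hom_trf.
apply: hom_comp; first exact: hom_trf.
by split.
Qed.

Lemma srep_valid t phi psi : sig_valid t -> inj_on (size (s_src t)) phi ->
  inj_on (size (s_tgt t)) psi -> sig_valid (srep t phi psi).
Proof.
move=> v hp hq; have [d c] := srep_hom v hp hq.
by split; [|split; [|split]].
Qed.

Lemma srep_rel t t' phi psi : sig_rel t t' -> inj_on (size (s_src t)) phi ->
  inj_on (size (s_tgt t)) psi -> s_f (srep t phi psi) = s_f (srep t' phi psi).
Proof.
move=> [[hi [ho [df cf]]] [[hi' [ho' [df' cf']]] [es [et ef]]]] hp hq.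
rewrite /srep /= ef es et.
rewrite es in hi' df'; rewrite et in ho' cf'.
have HF : Hom (s_f t) (pushf (s_in t) (s_src t)) (pushf (s_out t) (s_tgt t)) by split.
set A := trf psi (s_out t') (s_tgt t).
set B := trf (s_out t') (s_out t) (s_tgt t).
set D := trf (s_in t) (s_in t') (s_src t).
set E := trf (s_in t') phi (s_src t).
have hA : Hom A _ _ := hom_trf hq ho'.
have hB : Hom B _ _ := hom_trf ho' ho.
have hD : Hom D _ _ := hom_trf hi hi'.
have hE : Hom E _ _ := hom_trf hi' hp.
rewrite -(assoc hE (hom_comp hD HF) hB) -(assoc hE hD HF).
rewrite (assoc (hom_comp (hom_comp hE hD) HF) hB hA).
by rewrite /A /B /D /E !trf_comp.
Qed.

Lemma srep_equiv t t' : sig_equiv t t' ->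
  s_src t = s_src t' /\ s_tgt t = s_tgt t' /\
  forall phi psi, inj_on (size (s_src t)) phi -> inj_on (size (s_tgt t)) psi ->
    s_f (srep t phi psi) = s_f (srep t' phi psi).
Proof.
elim=> {t t'}.
- move=> t t' r; have [_ [_ [es [et _]]]] := r.
  split; first by []. split; first by []. move=> phi psi hp hq; exact: srep_rel.
- by move=> t; split; [|split].
- move=> t t' _ [es [et H]]; split; [by []|split; first by []].
  by move=> phi psi hp hq; rewrite H // ?es ?et.
- move=> t t' t'' _ [es [et H]] _ [es' [et' H']]; split; first by rewrite es.
  split; first by rewrite et.
  by move=> phi psi hp hq; rewrite H // H' // -?es -?et.
Qed.

Lemma srep_self t : sig_valid t -> s_f (srep t (s_in t) (s_out t)) = s_f t.
Proof.
move=> [hi [ho [df cf]]] /=.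
by rewrite !trf_id // comp_idr' // comp_idl'.
Qed.

Lemma rassoc f g h X Y Z W : Hom f X Y -> Hom g Y Z -> Hom h Z W ->
  compm (compm h g) f = compm h (compm g f).
Proof. by move=> *; symmetry; apply: assoc; eauto. Qed.

Ltac hom_auto := eauto using hom_comp.
Ltac norm := repeat (erewrite rassoc; [| hom_auto | hom_auto | hom_auto]).

Lemma scomp_srep t1 t2 phi psi rho : sig_valid t1 -> sig_valid t2 -> s_tgt t1 = s_src t2 ->
  inj_on (size (s_src t1)) phi -> inj_on (size (s_tgt t1)) psi -> inj_on (size (s_tgt t2)) rho ->
  s_f (srep (scomp t2 t1) phi rho) = compm (s_f (srep t2 psi rho)) (s_f (srep t1 phi psi)).
Proof.
move=> [hi1 [ho1 [df1 cf1]]] [hi2 [ho2 [df2 cf2]]] e hp hq hr.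
rewrite /srep /scomp /=.
rewrite -e in hi2 df2 *.
have F1 : Hom (s_f t1) (pushf (s_in t1) (s_src t1)) (pushf (s_out t1) (s_tgt t1)) by split.
have F2 : Hom (s_f t2) (pushf (s_in t2) (s_tgt t1)) (pushf (s_out t2) (s_tgt t2)) by split.
have hA := hom_trf hr ho2.
have hB1 := hom_trf hi2 hq.
have hB2 := hom_trf hq ho1.
have hD := hom_trf hi1 hp.
rewrite -(trf_comp hi2 hq ho1).
norm.
by [].
Qed.

End Sig.

Ltac hom_auto2 := eauto using hom_comp.
Ltac norm2 := repeat (erewrite rassoc; [| hom_auto2 | hom_auto2 | hom_auto2]).



Section Main.
Variable C : parsummable.
Variable phi : nat -> nat -> nat.
Hypothesis phi_inj : forall i j x y, phi i x = phi j y -> i = j /\ x = y.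
Implicit Types P Q : seq (nat * Ob C).

Lemma keys_uniq P : th_ob P -> uniq (map fst P).
Proof. exact: sorted_uniq ltn_trans ltnn _. Qed.

Lemma restr_inj P : th_ob P -> inj_on (size (map snd P)) (restr phi P).
Proof.
move=> sP i j x y hi hj /phi_inj [e ->]; split=> //.
apply/eqP; rewrite -(nth_uniq 0 _ _ (keys_uniq sP)) ?e //; by rewrite size_map -(size_map snd).
Qed.

Lemma part1 (a : th_mor C) : th_valid a ->
     let r := srep (t_rep a) (restr phi (t_src a)) (restr phi (t_tgt a)) in
     sig_valid r /\ sig_equiv (t_rep a) r /\ S_mor phi a = s_f r /\
     (forall f : Mor C,
        let r' := SigMor (s_src (t_rep a)) (s_tgt (t_rep a))
                         (restr phi (t_src a)) (restr phi (t_tgt a)) f in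
        sig_valid r' -> sig_equiv (t_rep a) r' -> f = S_mor phi a).
Proof.
move=> [sP [sQ [es [et v]]]] r.
have hp : inj_on (size (s_src (t_rep a))) (restr phi (t_src a)) by rewrite es; exact: restr_inj.
have hq : inj_on (size (s_tgt (t_rep a))) (restr phi (t_tgt a)) by rewrite et; exact: restr_inj.
have vr : sig_valid r := srep_valid v hp hq.
split=> //; split; first by apply: rst_step; split=> //; split.
split=> // f r' vr' eq.
have [_ [_ H]] := srep_equiv eq.
rewrite /S_mor (H _ _ hp hq).
by have /= := srep_self vr'.
Qed.

Lemma part2 (a b : th_mor C) : th_valid a -> th_valid b -> th_equiv a b ->
     S_mor phi a = S_mor phi b.
Proof.
move=> [sP [sQ [es [et v]]]] _ [e1 [e2 eq]].
have hp : inj_on (size (s_src (t_rep a))) (restr phi (t_src a)) by rewrite es; exact: restr_inj.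
have hq : inj_on (size (s_tgt (t_rep a))) (restr phi (t_tgt a)) by rewrite et; exact: restr_inj.
have [_ [_ H]] := srep_equiv eq.
by rewrite /S_mor -e1 -e2 H.
Qed.

Lemma part3 (a : th_mor C) : th_valid a ->
     dom (S_mor phi a) = S_ob phi (t_src a) /\ cod (S_mor phi a) = S_ob phi (t_tgt a).
Proof.
move=> [sP [sQ [es [et v]]]].
have hp : inj_on (size (s_src (t_rep a))) (restr phi (t_src a)) by rewrite es; exact: restr_inj.
have hq : inj_on (size (s_tgt (t_rep a))) (restr phi (t_tgt a)) by rewrite et; exact: restr_inj.
have [d c] := srep_hom v hp hq.
by rewrite /S_mor d c es et.
Qed.

Lemma part4 (P : seq (nat * Ob C)) (theta : nat -> nat -> nat) :
     th_ob P -> inj_on (size P) theta ->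
     S_mor phi (ThMor P P (SigMor (map snd P) (map snd P) theta theta
                                  (idm (pushf theta (map snd P)))))
       = idm (S_ob phi P).
Proof.
move=> sP ht; rewrite -(size_map snd) in ht.
have hr := restr_inj sP.
rewrite /S_mor /srep /=.
rewrite comp_idl'; last by rewrite trf_cod.
by rewrite trf_comp // trf_id.
Qed.

Lemma part5 (a b : th_mor C) : th_valid a -> th_valid b -> t_tgt a = t_src b ->
     S_mor phi (th_comp b a) = compm (S_mor phi b) (S_mor phi a).
Proof.
move=> [sP [sQ [es [et v]]]] [sP' [sQ' [es' [et' v']]]] e.
rewrite /S_mor /th_comp /= -e.
apply: scomp_srep => //.
- by rewrite et es' e.
- by rewrite es; exact: restr_inj.
- by rewrite et e; exact: restr_inj.
- by rewrite et'; exact: restr_inj.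
Qed.

End Main.


Lemma pinj_inj i j x y : pinj i x = pinj j y -> i = j /\ x = y.
Proof.
elim: i j => [|i IH] [|j] /=; rewrite /pinj.
- by rewrite !expn0 !mul1n => -[] /double_inj.
- by rewrite expn0 mul1n => /(congr1 odd); rewrite oddM oddX /= odd_double.
- by rewrite expn0 mul1n => /(congr1 odd); rewrite oddM oddX /= odd_double.
- rewrite !expnS -!mulnA => /eqP; rewrite eqn_pmul2l // => /eqP /IH [-> ->] //.
Qed.

Lemma in_key T (x : nat * T) L : List.In x L -> x.1 \in map fst L.
Proof. elim: L => [|y L IH] //= [->|/IH]; rewrite inE ?eqxx // => ->; by rewrite orbT. Qed.

Section Sums.
Variable C : parsummable.
Variable phi : nat -> nat -> nat.
Hypothesis phi_inj : forall i j x y, phi i x = phi j y -> i = j /\ x = y.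
Implicit Types P Q : seq (nat * Ob C).
Implicit Types X Y Z : Ob C.

Lemma disj_add X Y Z : disj_supp X Y -> disj_supp X Z -> disj_supp Y Z -> disj_supp X (add Y Z).
Proof.
move=> dXY dXZ dYZ; apply: disj_of (fun i h => h) (supp_in_add dYZ (fun i h => h) (fun i h => h)) _.
by move=> i hX [hY|hZ]; [exact: dXY hX hY|exact: dXZ hX hZ].
Qed.

Lemma restr_inj' P : uniq (map fst P) -> inj_on (size (map snd P)) (restr phi P).
Proof.
move=> uP i j x y hi hj /phi_inj [e ->]; split=> //.
apply/eqP; rewrite -(nth_uniq 0 _ _ uP) ?e //; by rewrite size_map -(size_map snd).
Qed.

Lemma keys_merge P P' : map fst (th_add P P') = merge leq (map fst P) (map fst P').
Proof. by apply: map_merge. Qed.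

Definition obf := fld (@add C) (zero C) (fun p : nat * Ob C => act (phi p.1) p.2).

Lemma S_ob_fld P : S_ob phi P = obf P.
Proof. elim: P => [|p P IH] //=; by rewrite -IH. Qed.

Lemma S_ob_disj P Q : th_ob P -> th_ob Q -> th_disj P Q -> disj_supp (S_ob phi P) (S_ob phi Q).
Proof.
move=> sP sQ D; apply: disj_pushf; [exact: restr_inj' (keys_uniq sP)|exact: restr_inj' (keys_uniq sQ)|].
move=> k k' x y hk hk' /phi_inj [e _]; apply: (D (nth 0 (map fst P) k)).
  by apply: mem_nth; rewrite size_map -(size_map snd).
by rewrite e; apply: mem_nth; rewrite size_map -(size_map snd).
Qed.

Lemma act_disj a b X Y : a <> b -> disj_supp (act (phi a) X) (act (phi b) Y).
Proof.
have ia : forall c, injective (phi c) by move=> c x y /phi_inj [].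
move=> ab; apply: disj_of (supp_in_act (ia a)) (supp_in_act (ia b)) _.
by move=> i [x <-] [y /esym /phi_inj []].
Qed.

Lemma part7 P Q : th_ob P -> th_ob Q -> th_disj P Q ->
     disj_supp (S_ob phi P) (S_ob phi Q) /\
     S_ob phi (th_add P Q) = add (S_ob phi P) (S_ob phi Q).
Proof.
move=> sP sQ D; split; first exact: S_ob_disj.
rewrite !S_ob_fld /obf /th_add.
apply: (@fld_merge _ _ _ (@disj_supp C)) => //.
- exact: disj_sym.
- exact: disj_zero.
- exact: disj_add.
- exact: addA.
- exact: addC.
- exact: add0X.
- move=> x y _ _; exact: act_disj.
- by move=> x h; apply: (List.in_or_app P Q); left.
- by move=> x h; apply: (List.in_or_app P Q); right.
- exact: keys_uniq.
- exact: keys_uniq.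
- by move=> k k1; apply/negP => k2; exact: D k1 k2.
Qed.

End Sums.



Section Help.
Variable C : parsummable.
Implicit Types X Y Z : Ob C.
Implicit Types Xs Ys : seq (Ob C).

Lemma srep_change Xs Ys f (ph ps ph' ps' i o : nat -> nat -> nat) :
  inj_on (size Xs) i -> inj_on (size Ys) o -> dom f = pushf i Xs -> cod f = pushf o Ys ->
  inj_on (size Xs) ph -> inj_on (size Ys) ps -> inj_on (size Xs) ph' -> inj_on (size Ys) ps' ->
  compm (trf ps' ps Ys) (compm (compm (trf ps o Ys) (compm f (trf i ph Xs))) (trf ph ph' Xs))
  = compm (trf ps' o Ys) (compm f (trf i ph' Xs)).
Proof.
move=> hi ho df cf hph hps hph' hps'.
have F : Hom f (pushf i Xs) (pushf o Ys) by split.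
have h1 := hom_trf hps' hps; have h2 := hom_trf hps ho; have h3 := hom_trf hi hph.
have h4 := hom_trf hph hph'.
norm2.
rewrite (trf_comp hi hph hph').
by rewrite (assoc (hom_comp (hom_trf hi hph') F) h2 h1) (trf_comp hps' hps ho).
Qed.

Definition mcompat (f g : Mor C) := disj_supp (dom f) (dom g) /\ disj_supp (cod f) (cod g).

Lemma hom_addm f g X X' Y Y' : Hom f X Y -> Hom g X' Y' -> disj_supp X X' -> disj_supp Y Y' ->
  Hom (addm f g) (add X X') (add Y Y').
Proof.
move=> [df cf] [dg cg] d1 d2; split; [rewrite dom_addm|rewrite cod_addm];
  by rewrite ?df ?dg ?cf ?cg.
Qed.

Lemma addm_comp' f g f' g' X X' Y Y' Z Z' : Hom f X Y -> Hom g X' Y' -> Hom f' Y Z -> Hom g' Y' Z' ->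
  disj_supp X X' -> disj_supp Y Y' -> disj_supp Z Z' ->
  compm (addm f' g') (addm f g) = addm (compm f' f) (compm g' g).
Proof.
move=> [df cf] [dg cg] [df' cf'] [dg' cg'] d1 d2 d3.
by rewrite addm_comp ?df ?dg ?cf ?cg ?cf' ?cg' ?df' ?dg'.
Qed.

Lemma mfld_merge (leT : rel (nat * Ob C)) (G : nat * Ob C -> Mor C) L1 L2 :
  (forall x y, List.In x (L1 ++ L2) -> List.In y (L1 ++ L2) -> x.1 <> y.1 -> mcompat (G x) (G y)) ->
  uniq (map fst L1) -> uniq (map fst L2) ->
  (forall k, k \in map fst L1 -> k \notin map fst L2) ->
  fld (@addm C) (idm (zero C)) G (merge leT L1 L2) =
  addm (fld (@addm C) (idm (zero C)) G L1) (fld (@addm C) (idm (zero C)) G L2).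
Proof.
move=> HU u1 u2 D.
apply: (@fld_merge _ _ _ mcompat) => //.
- by move=> x y [h1 h2]; split; apply: disj_sym.
- by move=> x; split; rewrite ?dom_idm ?cod_idm; apply: disj_zero.
- move=> x y z [h1 h2] [h3 h4] [h5 h6].
  split; [rewrite dom_addm //|rewrite cod_addm //]; exact: disj_add.
- by move=> x y z [h1 h2] [h3 h4] [h5 h6]; apply: addmA.
- by move=> x y [h1 h2]; apply: addmC.
- exact: addm0f.
- exact: HU.
- by move=> x h; apply: List.in_or_app; left.
- by move=> x h; apply: List.in_or_app; right.
- exact: u1.
- exact: u2.
- exact: D.
Qed.

Lemma trf_elem (L : seq (nat * Ob C)) (F G : nat -> nat -> nat) :
  trf (fun j => F (nth 0 (map fst L) j)) (fun j => G (nth 0 (map fst L) j)) (map snd L) =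
  fld (@addm C) (idm (zero C)) (fun p => tr (F p.1) (G p.1) p.2) L.
Proof. by elim: L => [|p L IH] //=; rewrite -IH. Qed.

Lemma inj_on_cat n m f g : inj_on n f -> inj_on m g ->
  (forall i j x y, i < n -> j < m -> f i x = g j y -> False) -> inj_on (n + m) (cat_inj n f g).
Proof.
move=> hf hg H i j x y hi hj; rewrite /cat_inj.
case: ltnP => hin; case: ltnP => hjn.
- exact: hf.
- move=> e; exfalso; apply: (H i (j - n) x y) => //; by rewrite ltn_subLR.
- move=> e; exfalso; apply: (H j (i - n) y x) => //; by rewrite ltn_subLR.
- move=> /hg [] //; rewrite ?ltn_subLR // => e ->; split=> //.
  by rewrite -(subnK hin) -(subnK hjn) e.
Qed.

Lemma inj_on_postc n e f : injective e -> inj_on n f -> inj_on n (postc e f).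
Proof. by move=> ie hf i j x y hi hj /ie; apply: hf. Qed.

Lemma inj_pinj m : inj_on m pinj.
Proof. by move=> i j x y _ _ /pinj_inj. Qed.

Lemma inj_on_key n (K : seq nat) (ks : nat -> nat) : (forall i, i < n -> ks i \in K) ->
  (forall i j, i < n -> j < n -> ks i = ks j -> i = j) ->
  inj_on n (fun j => pinj (index (ks j) K)).
Proof.
move=> hK hk i j x y hi hj /pinj_inj [e ->]; split=> //.
apply: hk => //; by rewrite -(nth_index 0 (hK i hi)) e nth_index ?hK.
Qed.

End Help.



Section P8.
Variable C : parsummable.
Implicit Types P Q : seq (nat * Ob C).

Lemma act_disj_gen (u v : nat -> nat) (X Y : Ob C) : injective u -> injective v ->
  (forall x y, u x = v y -> False) -> disj_supp (act u X) (act v Y).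
Proof.
move=> iu iv H; apply: disj_of (supp_in_act iu) (supp_in_act iv) _.
by move=> i [x <-] [y /esym /H].
Qed.

Lemma trf_merge (L1 L2 : seq (nat * Ob C)) (F G : nat -> nat -> nat) :
  uniq (map fst L1) -> uniq (map fst L2) ->
  (forall k, k \in map fst L1 -> k \notin map fst L2) ->
  (forall k, k \in map fst L1 ++ map fst L2 -> injective (F k) /\ injective (G k)) ->
  (forall k k' x y, k \in map fst L1 ++ map fst L2 -> k' \in map fst L1 ++ map fst L2 ->
     F k x = F k' y -> k = k') ->
  (forall k k' x y, k \in map fst L1 ++ map fst L2 -> k' \in map fst L1 ++ map fst L2 ->
     G k x = G k' y -> k = k') ->
  trf (fun j => F (nth 0 (map fst (th_add L1 L2)) j)) (fun j => G (nth 0 (map fst (th_add L1 L2)) j))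
      (map snd (th_add L1 L2)) =
  addm (trf (fun j => F (nth 0 (map fst L1) j)) (fun j => G (nth 0 (map fst L1) j)) (map snd L1))
       (trf (fun j => F (nth 0 (map fst L2) j)) (fun j => G (nth 0 (map fst L2) j)) (map snd L2)).
Proof.
move=> u1 u2 D hI hF hG.
rewrite !trf_elem /th_add; apply: mfld_merge => // x y hx hy nxy.
have kx : x.1 \in map fst L1 ++ map fst L2 by rewrite -map_cat; exact: in_key.
have ky : y.1 \in map fst L1 ++ map fst L2 by rewrite -map_cat; exact: in_key.
have [iFx iGx] := hI _ kx; have [iFy iGy] := hI _ ky.
split; rewrite ?dom_tr ?cod_tr //; apply: act_disj_gen => // a b e; apply: nxy.
  exact: hG _ _ _ _ kx ky e.
exact: hF _ _ _ _ kx ky e.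
Qed.

End P8.



Section P8b.
Variable C : parsummable.
Variable phi : nat -> nat -> nat.
Hypothesis phi_inj : forall i j x y, phi i x = phi j y -> i = j /\ x = y.

Lemma part8 (a b : th_mor C) : th_valid a -> th_valid b ->
     th_disj (t_src a) (t_src b) -> th_disj (t_tgt a) (t_tgt b) ->
     S_mor phi (th_addm a b) = addm (S_mor phi a) (S_mor phi b).
Proof.
case: a => P Q [Xa Ya ina outa fa]; case: b => P' Q' [Xb Yb inb outb fb].
move=> [sP [sQ [eXa [eYa [hia [hoa [dfa cfa]]]]]]] [sP' [sQ' [eXb [eYb [hib [hob [dfb cfb]]]]]]].
simpl in *; subst Xa Ya Xb Yb.
move=> DP DQ.
rewrite /S_mor /th_addm /scomp /stensor /sperm /srep /=.
set Ps := map snd P; set Qs := map snd Q; set P's := map snd P'; set Q's := map snd Q'.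
set MP := th_add P P'; set MQ := th_add Q Q'.
set KP := map fst P ++ map fst P'; set KQ := map fst Q ++ map fst Q'.
have uP := keys_uniq sP; have uQ := keys_uniq sQ.
have uP' := keys_uniq sP'; have uQ' := keys_uniq sQ'.
have DP' : forall k, k \in map fst P -> k \notin map fst P' by move=> k k1; apply/negP => k2; exact: DP k1 k2.
have DQ' : forall k, k \in map fst Q -> k \notin map fst Q' by move=> k k1; apply/negP => k2; exact: DQ k1 k2.
have uKP : uniq KP.
  rewrite cat_uniq uP uP' andbT /=; apply/hasPn => k kP'; apply/negP => kP.
  by have := DP' k kP; rewrite kP'.
have uKQ : uniq KQ.
  rewrite cat_uniq uQ uQ' andbT /=; apply/hasPn => k kQ'; apply/negP => kQ.
  by have := DQ' k kQ; rewrite kQ'.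
have kMP : map fst MP = merge leq (map fst P) (map fst P') by exact: keys_merge.
have kMQ : map fst MQ = merge leq (map fst Q) (map fst Q') by exact: keys_merge.
have uMP : uniq (map fst MP) by rewrite kMP merge_uniq.
have uMQ : uniq (map fst MQ) by rewrite kMQ merge_uniq.
have mMP : forall k, (k \in map fst MP) = (k \in KP) by move=> k; rewrite kMP mem_merge.
have mMQ : forall k, (k \in map fst MQ) = (k \in KQ) by move=> k; rewrite kMQ mem_merge.
have ipinj : forall n, injective (pinj n) by move=> n x y /pinj_inj [].
have iphi : forall n, injective (phi n) by move=> n x y /phi_inj [].
have hKQ : forall k k' x y, k \in KQ -> k' \in KQ -> pinj (index k KQ) x = pinj (index k' KQ) y -> k = k'.
  move=> k k' x y hk hk' /pinj_inj [e _].
  by rewrite -(nth_index 0 hk) e nth_index.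
have hKP : forall k k' x y, k \in KP -> k' \in KP ->
    pinj (index k (map fst MP)) x = pinj (index k' (map fst MP)) y -> k = k'.
  move=> k k' x y; rewrite -!mMP => hk hk' /pinj_inj [e _].
  by rewrite -(nth_index 0 hk) e nth_index.
have EA : trf (restr phi MQ) (fun j x => pinj (index (nth 0 (map fst MQ) j) KQ) x) (map snd MQ) =
    addm (trf (restr phi Q) pinj Qs) (trf (restr phi Q') (shf (size Qs) pinj) Q's).
  etransitivity; first exact: (@trf_merge C Q Q' phi (fun k x => pinj (index k KQ) x) uQ uQ' DQ'
     (fun k _ => conj (iphi k) (ipinj _)) (fun k k' x y _ _ e => proj1 (phi_inj e)) hKQ).
  congr addm; apply: trf_ext => i hi //=.
    have hi' : i < size (map fst Q) by rewrite size_map -(size_map snd).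
    by rewrite /KQ index_cat mem_nth // index_uniq.
  have hi' : i < size (map fst Q') by rewrite size_map -(size_map snd).
  rewrite /KQ index_cat.
  have -> : (nth 0 (map fst Q') i \in map fst Q) = false.
    by apply/negP => /DQ'; rewrite mem_nth.
  by rewrite index_uniq // /shf /Qs !size_map.
have EB : trf pinj (restr phi MP) (map snd MP) =
    addm (trf (fun j x => pinj (index (nth 0 (map fst P) j) (map fst MP)) x) (restr phi P) Ps)
         (trf (fun j x => pinj (index (nth 0 (map fst P') j) (map fst MP)) x) (restr phi P') P's).
  etransitivity; last exact: (@trf_merge C P P' (fun k x => pinj (index k (map fst MP)) x) phi uP uP' DP'
     (fun k _ => conj (ipinj _) (iphi k)) hKP (fun k k' x y _ _ e => proj1 (phi_inj e))).
  apply: trf_ext => i hi //=.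
  have hi' : i < size (map fst MP) by rewrite size_map -(size_map snd).
  by rewrite index_uniq.
have ioa : inj_on (size Qs) (postc (fun x => x.*2) outa) := inj_on_postc double_inj hoa.
have iob : inj_on (size Q's) (postc (fun x => x.*2.+1) outb).
  by apply: inj_on_postc hob => x y [] /double_inj.
have iia : inj_on (size Ps) (postc (fun x => x.*2) ina) := inj_on_postc double_inj hia.
have iib : inj_on (size P's) (postc (fun x => x.*2.+1) inb).
  by apply: inj_on_postc hib => x y [] /double_inj.
have par : forall u v : nat, u.*2 = v.*2.+1 -> False.
  by move=> u v /(congr1 odd); rewrite /= !odd_double.
have EC : trf pinj (cat_inj (size Qs) (postc (fun x => x.*2) outa) (postc (fun x => x.*2.+1) outb)) (Qs ++ Q's)
   = addm (trf pinj (postc (fun x => x.*2) outa) Qs) (trf (shf (size Qs) pinj) (postc (fun x => x.*2.+1) outb) Q's).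
  rewrite trf_cat; first (congr addm; apply: trf_ext => i hi //).
  - by rewrite /cat_inj hi.
  - by rewrite /shf /cat_inj ltnNge leq_addr /= addKn.
  - exact: inj_pinj.
  rewrite size_cat; apply: inj_on_cat => // i j x y _ _; exact: par.
have ED : trf (cat_inj (size Ps) (postc (fun x => x.*2) ina) (postc (fun x => x.*2.+1) inb))
     (fun j x => pinj (index (nth 0 KP j) (map fst MP)) x) (Ps ++ P's)
   = addm (trf (postc (fun x => x.*2) ina) (fun j x => pinj (index (nth 0 (map fst P) j) (map fst MP)) x) Ps)
          (trf (postc (fun x => x.*2.+1) inb) (fun j x => pinj (index (nth 0 (map fst P') j) (map fst MP)) x) P's).
  rewrite trf_cat; first (congr addm; apply: trf_ext => i hi //).
  - by rewrite /cat_inj hi.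
  - by rewrite /KP nth_cat size_map -(size_map snd) hi.
  - by rewrite /shf /cat_inj ltnNge leq_addr /= addKn.
  - by rewrite /shf /KP nth_cat size_map -(size_map snd) ltnNge leq_addr /= addKn.
  - rewrite size_cat; apply: inj_on_cat => // i j x y _ _; exact: par.
  apply: inj_on_key => [i hi|i j hi hj e].
    by rewrite mMP mem_nth // /KP size_cat !size_map -(size_map snd P) -(size_map snd P') -size_cat.
  apply/eqP; rewrite -(nth_uniq 0 _ _ uKP) ?e //;
    by rewrite /KP size_cat !size_map -(size_map snd P) -(size_map snd P') -size_cat.
set kP := (fun j x => pinj (index (nth 0 (map fst P) j) (map fst MP)) x).
set kP' := (fun j x => pinj (index (nth 0 (map fst P') j) (map fst MP)) x).
have ikP : inj_on (size Ps) kP.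
  apply: inj_on_key => [i hi|i j hi hj e].
    by rewrite mMP mem_cat mem_nth // size_map -(size_map snd).
  apply/eqP; rewrite -(nth_uniq 0 _ _ uP) ?e // size_map -(size_map snd) //.
have ikP' : inj_on (size P's) kP'.
  apply: inj_on_key => [i hi|i j hi hj e].
    by rewrite mMP mem_cat mem_nth ?orbT // size_map -(size_map snd).
  apply/eqP; rewrite -(nth_uniq 0 _ _ uP') ?e // size_map -(size_map snd) //.
have irP : inj_on (size Ps) (restr phi P) := restr_inj' phi_inj uP.
have irP' : inj_on (size P's) (restr phi P') := restr_inj' phi_inj uP'.
have irQ : inj_on (size Qs) (restr phi Q) := restr_inj' phi_inj uQ.
have irQ' : inj_on (size Q's) (restr phi Q') := restr_inj' phi_inj uQ'.
have ipQ : inj_on (size Qs) pinj := @inj_pinj _.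
have ipQ' : inj_on (size Q's) (shf (size Qs) pinj) := inj_on_shf (@inj_pinj _).
have hA1 := hom_trf irQ ipQ.
have hA2 := hom_trf irQ' ipQ'.
have hC1 := hom_trf ipQ ioa.
have hC2 := hom_trf ipQ' iob.
have hD1 := hom_trf iia ikP.
have hD2 := hom_trf iib ikP'.
have hB1 := hom_trf ikP irP.
have hB2 := hom_trf ikP' irP'.
have hfa : Hom (compm (trf (postc (fun x => x.*2) outa) outa Qs) (compm fa (trf ina (postc (fun x => x.*2) ina) Ps)))
  (pushf (postc (fun x => x.*2) ina) Ps) (pushf (postc (fun x => x.*2) outa) Qs).
  by apply: (@srep_hom C (SigMor Ps Qs ina outa fa)).
have hfb : Hom (compm (trf (postc (fun x => x.*2.+1) outb) outb Q's) (compm fb (trf inb (postc (fun x => x.*2.+1) inb) P's)))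
  (pushf (postc (fun x => x.*2.+1) inb) P's) (pushf (postc (fun x => x.*2.+1) outb) Q's).
  by apply: (@srep_hom C (SigMor P's Q's inb outb fb)).
have dQ : disj_supp (pushf (restr phi Q) Qs) (pushf (restr phi Q') Q's) := S_ob_disj phi_inj sQ sQ' DQ.
have dP : disj_supp (pushf (restr phi P) Ps) (pushf (restr phi P') P's) := S_ob_disj phi_inj sP sP' DP.
have dQP : disj_supp (pushf pinj Qs) (pushf (shf (size Qs) pinj) Q's).
  apply: disj_pushf => // k k' x y hk _ /pinj_inj [e _]; move: hk; by rewrite e ltnNge leq_addr.
have dQ2 : disj_supp (pushf (postc (fun x => x.*2) outa) Qs) (pushf (postc (fun x => x.*2.+1) outb) Q's).
  by apply: disj_pushf => // k k' x y _ _; apply: par.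
have dP2 : disj_supp (pushf (postc (fun x => x.*2) ina) Ps) (pushf (postc (fun x => x.*2.+1) inb) P's).
  by apply: disj_pushf => // k k' x y _ _; apply: par.
have dPK : disj_supp (pushf kP Ps) (pushf kP' P's).
  apply: disj_pushf => // k k' x y hk hk' /pinj_inj [e _].
  have m1 : nth 0 (map fst P) k \in map fst MP by rewrite mMP mem_cat mem_nth // size_map -(size_map snd).
  have m2 : nth 0 (map fst P') k' \in map fst MP by rewrite mMP mem_cat mem_nth ?orbT // size_map -(size_map snd).
  have e2 : nth 0 (map fst P) k = nth 0 (map fst P') k' by rewrite -(nth_index 0 m1) e nth_index.
  apply: (DP (nth 0 (map fst P) k)); first by rewrite mem_nth // size_map -(size_map snd).
  by rewrite e2 mem_nth // size_map -(size_map snd).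
have EP : pushf pinj (map snd MP) = add (pushf kP Ps) (pushf kP' P's).
  have iMP : inj_on (size (map snd MP)) (restr phi MP) := restr_inj' phi_inj uMP.
  rewrite -(trf_cod (@inj_pinj _) iMP) EB cod_addm; last first.
  - by rewrite !trf_cod.
  - by rewrite !trf_dom.
  by rewrite !trf_cod.
have EQ : pushf pinj (Qs ++ Q's) = add (pushf pinj Qs) (pushf (shf (size Qs) pinj) Q's).
  by rewrite pushf_cat //; exact: inj_pinj.
rewrite EA EB EC ED EP EQ.
have hA := hom_addm hA1 hA2 dQP dQ.
have hB := hom_addm hB1 hB2 dP dPK.
have hC := hom_addm hC1 hC2 dQ2 dQP.
have hD := hom_addm hD1 hD2 dPK dP2.
have hF := hom_addm hfa hfb dP2 dQ2.
rewrite (comp_idr' (proj1 hD)).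
rewrite (comp_idl' (proj2 (hom_comp (hom_comp hD hF) hC))).
norm2.
rewrite (addm_comp' hB1 hB2 hD1 hD2 dP dPK dP2).
rewrite (addm_comp' (hom_comp hB1 hD1) (hom_comp hB2 hD2) hfa hfb dP dP2 dQ2).
rewrite (addm_comp' (hom_comp (hom_comp hB1 hD1) hfa) (hom_comp (hom_comp hB2 hD2) hfb) hC1 hC2 dP dQ2 dQP).
rewrite (addm_comp' (hom_comp (hom_comp (hom_comp hB1 hD1) hfa) hC1)
   (hom_comp (hom_comp (hom_comp hB2 hD2) hfb) hC2) hA1 hA2 dP dQP dQ).
congr addm.
  rewrite (trf_comp iia ikP irP).
  rewrite (assoc (hom_comp (hom_trf iia irP) hfa) hC1 hA1) (trf_comp irQ ipQ ioa).
  exact: srep_change.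
rewrite (trf_comp iib ikP' irP').
rewrite (assoc (hom_comp (hom_trf iib irP') hfb) hC2 hA2) (trf_comp irQ' ipQ' iob).
exact: srep_change.
Qed.
End P8b.

Theorem proposition3p22 (C : parsummable) (phi : nat -> nat -> nat)
  (phi_inj : forall i j x y, phi i x = phi j y -> i = j /\ x = y) :
  (* well-defined: (phi|_B kappa_B, S(a), phi|_A kappa_A) is the unique
     representative of a with these injections *)
  (forall a : th_mor C, th_valid a ->
     let r := srep (t_rep a) (restr phi (t_src a)) (restr phi (t_tgt a)) in
     sig_valid r /\ sig_equiv (t_rep a) r /\ S_mor phi a = s_f r /\
     (forall f : Mor C,
        let r' := SigMor (s_src (t_rep a)) (s_tgt (t_rep a))
                         (restr phi (t_src a)) (restr phi (t_tgt a)) f in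
        sig_valid r' -> sig_equiv (t_rep a) r' -> f = S_mor phi a)) /\
  (forall a b : th_mor C, th_valid a -> th_valid b -> th_equiv a b ->
     S_mor phi a = S_mor phi b) /\
  (* functor *)
  (forall a : th_mor C, th_valid a ->
     dom (S_mor phi a) = S_ob phi (t_src a) /\ cod (S_mor phi a) = S_ob phi (t_tgt a)) /\
  (forall (P : seq (nat * Ob C)) (theta : nat -> nat -> nat),
     th_ob P -> inj_on (size P) theta ->
     S_mor phi (ThMor P P (SigMor (map snd P) (map snd P) theta theta
                                  (idm (pushf theta (map snd P)))))
       = idm (S_ob phi P)) /\
  (forall a b : th_mor C, th_valid a -> th_valid b -> t_tgt a = t_src b ->
     S_mor phi (th_comp b a) = compm (S_mor phi b) (S_mor phi a)) /\
  (* preserves sums *)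
  S_ob phi [::] = zero C /\
  (forall P Q : seq (nat * Ob C), th_ob P -> th_ob Q -> th_disj P Q ->
     disj_supp (S_ob phi P) (S_ob phi Q) /\
     S_ob phi (th_add P Q) = add (S_ob phi P) (S_ob phi Q)) /\
  (forall a b : th_mor C, th_valid a -> th_valid b ->
     th_disj (t_src a) (t_src b) -> th_disj (t_tgt a) (t_tgt b) ->
     S_mor phi (th_addm a b) = addm (S_mor phi a) (S_mor phi b)).
Proof.
split; first by move=> a; apply: (part1 phi_inj).
split; first by move=> a b; apply: (part2 phi_inj).
split; first by move=> a; apply: (part3 phi_inj).
split; first by move=> P theta; apply: (part4 phi_inj).
split; first by move=> a b; apply: (part5 phi_inj).
split; first by [].
split; first by move=> P Q; apply: (part7 phi_inj).
by move=> a b; apply: (part8 phi_inj).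
Qed.
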